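(* An elementary pair $M\prec N$ of models of Presburger arithmetic is stably embedded if and only if $N$ is an end-extension of $M$. In particular, the class of stably embedded pairs of models of Presburger arithmetic is elementary in the language of pairs $\mathcal L_P$.
   Context: The pair $M\prec N$ is stably embedded if for every $\mathcal L(N)$-definable $X\subseteq N^n$, $X\cap M^n$ is $\mathcal L(M)$-definable. $N$ is an end-extension of $M$ if no element of $N\setminus M$ lies between two elements of $M$ (every element of $N\setminus M$ is above all of $M$ or below all of $M$). $\mathcal L_P$ extends the Presburger language by a unary predicate $P$ interpreted as $M$. *)

(* Defs.v *)
From Stdlib Require Import ZArith Arith.

(* Presburger language {0, 1, +, -, <} (equality is interpreted as Leibniz
   equality on the carrier). *)
Record Lstruct := {
  car :> Type;
  s_zero : car;
  s_one : car;
  s_add : car -> car -> car;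
  s_opp : car -> car;
  s_lt : car -> car -> Prop
}.

Inductive term : Type :=
| TVar : nat -> term
| TZero : term
| TOne : term
| TAdd : term -> term -> term
| TOpp : term -> term.

Inductive form : Type :=
| FEq : term -> term -> form
| FLt : term -> term -> form
| FBot : form
| FNot : form -> form
| FAnd : form -> form -> form
| FOr : form -> form -> form
| FImp : form -> form -> form
| FAll : nat -> form -> form
| FEx : nat -> form -> form.

Inductive formP : Type :=
| PEq : term -> term -> formP
| PLt : term -> term -> formP
| PMem : term -> formP
| PBot : formP
| PNot : formP -> formP
| PAnd : formP -> formP -> formP
| POr : formP -> formP -> formP
| PImp : formP -> formP -> formP
| PAll : nat -> formP -> formP
| PEx : nat -> formP -> formP.

Definition upd {T : Type} (e : nat -> T) (i : nat) (x : T) : nat -> T :=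
  fun j => if Nat.eqb j i then x else e j.

Fixpoint eval (S : Lstruct) (e : nat -> S) (t : term) : S :=
  match t with
  | TVar i => e i
  | TZero => s_zero S
  | TOne => s_one S
  | TAdd t1 t2 => s_add S (eval S e t1) (eval S e t2)
  | TOpp t1 => s_opp S (eval S e t1)
  end.

Fixpoint sat (S : Lstruct) (e : nat -> S) (phi : form) : Prop :=
  match phi with
  | FEq t1 t2 => eval S e t1 = eval S e t2
  | FLt t1 t2 => s_lt S (eval S e t1) (eval S e t2)
  | FBot => False
  | FNot p => ~ sat S e p
  | FAnd p q => sat S e p /\ sat S e q
  | FOr p q => sat S e p \/ sat S e q
  | FImp p q => sat S e p -> sat S e q
  | FAll i p => forall x : S, sat S (upd e i x) p
  | FEx i p => exists x : S, sat S (upd e i x) p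
  end.

Fixpoint satP (S : Lstruct) (P : S -> Prop) (e : nat -> S) (phi : formP) : Prop :=
  match phi with
  | PEq t1 t2 => eval S e t1 = eval S e t2
  | PLt t1 t2 => s_lt S (eval S e t1) (eval S e t2)
  | PMem t => P (eval S e t)
  | PBot => False
  | PNot p => ~ satP S P e p
  | PAnd p q => satP S P e p /\ satP S P e q
  | POr p q => satP S P e p \/ satP S P e q
  | PImp p q => satP S P e p -> satP S P e q
  | PAll i p => forall x : S, satP S P (upd e i x) p
  | PEx i p => exists x : S, satP S P (upd e i x) p
  end.

Definition Zstruct : Lstruct :=
  {| car := Z; s_zero := 0%Z; s_one := 1%Z; s_add := Z.add;
     s_opp := Z.opp; s_lt := Z.lt |}.

(* Models of Presburger arithmetic = models of Th(Z, 0, 1, +, -, <):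
   every formula valid in Z (i.e. whose universal closure is true in Z)
   is valid in S. *)
Definition Presburger_model (S : Lstruct) : Prop :=
  forall phi : form, (forall e : nat -> Zstruct, sat Zstruct e phi) ->
    forall e : nat -> S, sat S e phi.

(* f : M -> N is an elementary embedding, i.e. M ≺ N (identifying M
   with its image). *)
Definition elementary_map (M N : Lstruct) (f : M -> N) : Prop :=
  forall (phi : form) (e : nat -> M), sat M e phi <-> sat N (fun i => f (e i)) phi.

Definition merge {T : Type} (n : nat) (a e : nat -> T) : nat -> T :=
  fun i => if Nat.ltb i n then a i else e i.

(* Stable embeddedness: for every L(N)-definable X ⊆ N^n (defined by phi
   with free variables 0..n-1 and parameters given by b), X ∩ M^n is
   L(M)-definable in M (by psi with parameters c from M). *)
Definition stably_embedded (M N : Lstruct) (f : M -> N) : Prop :=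
  forall (n : nat) (phi : form) (b : nat -> N),
    exists (psi : form) (c : nat -> M),
      forall a : nat -> M,
        sat N (merge n (fun i => f (a i)) b) phi <-> sat M (merge n a c) psi.

Definition end_extension (M N : Lstruct) (f : M -> N) : Prop :=
  forall y : N, (exists x : M, f x = y) \/
                (forall x : M, s_lt N (f x) y) \/
                (forall x : M, s_lt N y (f x)).

(* Main.v *)
Require Import Defs.
From Stdlib Require Import ZArith Arith Lia List Bool Classical FunctionalExtensionality ProofIrrelevance ClassicalEpsilon.
Import ListNotations.

Lemma upd_same {T} (e : nat -> T) i x : upd e i x i = x.
Proof. unfold upd; now rewrite Nat.eqb_refl. Qed.
Lemma upd_other {T} (e : nat -> T) i j x : j <> i -> upd e i x j = e j.
Proof. intro H; unfold upd; apply Nat.eqb_neq in H; now rewrite H. Qed.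

Definition lin := (Z * list (nat * Z))%type.
Fixpoint lsum (e : nat -> Z) (l : list (nat * Z)) : Z :=
  match l with [] => 0%Z | p :: l' => (snd p * e (fst p) + lsum e l')%Z end.
Definition leval e (t : lin) : Z := (fst t + lsum e (snd t))%Z.
Fixpoint lcoef x (l : list (nat * Z)) : Z :=
  match l with [] => 0%Z | p :: l' => ((if Nat.eqb (fst p) x then snd p else 0) + lcoef x l')%Z end.
Definition lrem x (l : list (nat * Z)) := filter (fun p => negb (Nat.eqb (fst p) x)) l.

Lemma lsum_split e x l : lsum e l = (lcoef x l * e x + lsum e (lrem x l))%Z.
Proof.
  induction l as [|[i c] l IH]; simpl. lia.
  destruct (Nat.eqb i x) eqn:E; simpl.
  - apply Nat.eqb_eq in E; subst. rewrite IH. ring.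
  - rewrite IH. ring.
Qed.
Lemma lcoef_rem x l : lcoef x (lrem x l) = 0%Z.
Proof.
  induction l as [|[i c] l IH]; simpl. lia.
  destruct (Nat.eqb i x) eqn:E; simpl; try rewrite E; simpl; lia.
Qed.
Lemma lsum_rem_upd e x v l : lsum (upd e x v) (lrem x l) = lsum e (lrem x l).
Proof.
  induction l as [|[i c] l IH]; simpl. lia.
  destruct (Nat.eqb i x) eqn:E; simpl; auto.
  rewrite IH, upd_other; auto. now apply Nat.eqb_neq.
Qed.
Definition lscale m (t : lin) : lin := ((m * fst t)%Z, map (fun p => (fst p, (m * snd p)%Z)) (snd t)).
Lemma lsum_scale e m l : lsum e (map (fun p => (fst p, (m * snd p)%Z)) l) = (m * lsum e l)%Z.
Proof. induction l; simpl; [lia|]. rewrite IHl. ring. Qed.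
Lemma lcoef_scale x m l : lcoef x (map (fun p => (fst p, (m * snd p)%Z)) l) = (m * lcoef x l)%Z.
Proof. induction l; simpl; [lia|]. rewrite IHl. destruct (Nat.eqb (fst a) x); ring. Qed.
Lemma leval_scale e m t : leval e (lscale m t) = (m * leval e t)%Z.
Proof. unfold leval, lscale; simpl. rewrite lsum_scale. ring. Qed.
Definition ladd (t u : lin) : lin := ((fst t + fst u)%Z, snd t ++ snd u).
Lemma lsum_app e l1 l2 : lsum e (l1 ++ l2) = (lsum e l1 + lsum e l2)%Z.
Proof. induction l1; simpl; [lia|]. rewrite IHl1. ring. Qed.
Lemma lcoef_app x l1 l2 : lcoef x (l1 ++ l2) = (lcoef x l1 + lcoef x l2)%Z.
Proof. induction l1; simpl; [lia|]. rewrite IHl1. ring. Qed.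
Lemma leval_add e t u : leval e (ladd t u) = (leval e t + leval e u)%Z.
Proof. unfold leval, ladd; simpl. rewrite lsum_app. ring. Qed.
Definition lconst c : lin := (c, []).
Definition lvar x : lin := (0%Z, [(x, 1%Z)]).
Definition lneg t := lscale (-1)%Z t.
Lemma leval_const e c : leval e (lconst c) = c.
Proof. unfold leval; simpl; lia. Qed.
Lemma leval_var e x : leval e (lvar x) = e x.
Proof. unfold leval, lvar, lsum, fst, snd. ring. Qed.
Lemma leval_neg e t : leval e (lneg t) = (- leval e t)%Z.
Proof. unfold lneg. rewrite leval_scale. ring. Qed.

Lemma leval_upd e x v t :
  leval (upd e x v) t = (fst t + lcoef x (snd t) * v + lsum e (lrem x (snd t)))%Z.
Proof. unfold leval. rewrite (lsum_split _ x), lsum_rem_upd, upd_same. ring. Qed.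

Definition lsubst x (s t : lin) : lin :=
  ladd (fst t, lrem x (snd t)) (lscale (lcoef x (snd t)) s).
Lemma leval_subst e x s t : leval e (lsubst x s t) = leval (upd e x (leval e s)) t.
Proof.
  unfold lsubst. rewrite leval_add, leval_scale, leval_upd. unfold leval at 1; simpl. ring.
Qed.

Inductive qf : Type :=
| QT | QF | QLt (t : lin) | QDv (k : positive) (t : lin) | QNDv (k : positive) (t : lin)
| QAnd (a b : qf) | QOr (a b : qf).

Fixpoint qsem (e : nat -> Z) (q : qf) : Prop :=
  match q with
  | QT => True | QF => False
  | QLt t => (0 < leval e t)%Z
  | QDv k t => (Z.pos k | leval e t)%Z
  | QNDv k t => ~ (Z.pos k | leval e t)%Z
  | QAnd a b => qsem e a /\ qsem e b
  | QOr a b => qsem e a \/ qsem e b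
  end.

Fixpoint qneg (q : qf) : qf :=
  match q with
  | QT => QF | QF => QT
  | QLt t => QLt (ladd (lconst 1) (lneg t))
  | QDv k t => QNDv k t | QNDv k t => QDv k t
  | QAnd a b => QOr (qneg a) (qneg b)
  | QOr a b => QAnd (qneg a) (qneg b)
  end.
Lemma qneg_sem e q : qsem e (qneg q) <-> ~ qsem e q.
Proof.
  induction q; simpl.
  - tauto. - tauto.
  - rewrite leval_add, leval_const, leval_neg. lia.
  - tauto.
  - split; [tauto| apply NNPP].
  - rewrite IHq1, IHq2. split; [tauto|]. intro H. apply not_and_or in H. tauto.
  - rewrite IHq1, IHq2. tauto.
Qed.

Fixpoint atoms (q : qf) : list qf :=
  match q with QAnd a b | QOr a b => atoms a ++ atoms b | _ => [q] end.
Fixpoint qmap (fa : qf -> qf) (q : qf) : qf :=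
  match q with
  | QAnd a b => QAnd (qmap fa a) (qmap fa b)
  | QOr a b => QOr (qmap fa a) (qmap fa b)
  | _ => fa q end.
Lemma qmap_sem fa e1 e2 q :
  (forall a, In a (atoms q) -> (qsem e1 (fa a) <-> qsem e2 a)) ->
  (qsem e1 (qmap fa q) <-> qsem e2 q).
Proof.
  induction q; simpl; intro H; try (apply H; now left);
  rewrite IHq1, IHq2; try tauto; intros; apply H, in_or_app; auto.
Qed.
Lemma qsem_mono e1 e2 q :
  (forall a, In a (atoms q) -> qsem e1 a -> qsem e2 a) -> qsem e1 q -> qsem e2 q.
Proof.
  induction q; intro H; try exact (H _ (or_introl eq_refl)); simpl in *;
  (assert (H1 : forall a, In a (atoms q1) -> qsem e1 a -> qsem e2 a) by (intros; apply H; auto; apply in_or_app; auto));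
  (assert (H2 : forall a, In a (atoms q2) -> qsem e1 a -> qsem e2 a) by (intros; apply H; auto; apply in_or_app; auto));
  specialize (IHq1 H1); specialize (IHq2 H2); tauto.
Qed.
Definition isatom (a : qf) : Prop := match a with QAnd _ _ | QOr _ _ => False | _ => True end.
Lemma atoms_isatom q a : In a (atoms q) -> isatom a.
Proof.
  induction q; simpl; intro H; try (destruct H as [<-|[]]; exact I);
  apply in_app_or in H; destruct H; auto.
Qed.

Lemma atoms_qmap fa q : (forall a, isatom a -> atoms (fa a) = [fa a]) ->
  forall a, In a (atoms (qmap fa q)) -> exists a0, In a0 (atoms q) /\ a = fa a0.
Proof.
  intro Hf; induction q; simpl; intros a Ha.
  1-5: rewrite Hf in Ha by exact I; destruct Ha as [<-|[]]; eexists; split; [left; reflexivity | reflexivity].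
  all: apply in_app_or in Ha; destruct Ha as [Ha|Ha];
  [destruct (IHq1 _ Ha) as [a0 [? ?]] | destruct (IHq2 _ Ha) as [a0 [? ?]]];
  exists a0; split; auto; apply in_or_app; auto.
Qed.
Lemma qmap_congr fa e1 e2 q :
  (forall a, In a (atoms q) -> (qsem e1 (fa a) <-> qsem e2 (fa a))) ->
  (qsem e1 (qmap fa q) <-> qsem e2 (qmap fa q)).
Proof.
  induction q; simpl; intro H; try (apply H; now left);
  rewrite IHq1, IHq2; try tauto; intros; apply H, in_or_app; auto.
Qed.

Definition asubst x s (a : qf) : qf :=
  match a with
  | QLt t => QLt (lsubst x s t) | QDv k t => QDv k (lsubst x s t)
  | QNDv k t => QNDv k (lsubst x s t) | _ => a end.
Definition qsubst x s q := qmap (asubst x s) q.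
Lemma qsubst_sem e x s q : qsem e (qsubst x s q) <-> qsem (upd e x (leval e s)) q.
Proof.
  apply qmap_sem. intros a Ha. apply atoms_isatom in Ha.
  destruct a; simpl in *; try rewrite leval_subst; tauto.
Qed.
Lemma lrem_lrem x l : lrem x (lrem x l) = lrem x l.
Proof.
  induction l as [|[i c] l IH]; simpl. reflexivity.
  destruct (Nat.eqb i x) eqn:E; simpl; auto. rewrite E; simpl. now rewrite IH.
Qed.

Open Scope Z_scope.

Definition acoef x (a : qf) : Z :=
  match a with QLt t | QDv _ t | QNDv _ t => lcoef x (snd t) | _ => 0%Z end.
Definition Lfold x (l : list qf) : Z :=
  fold_right (fun a acc => ((if Z.abs (acoef x a) =? 0 then 1 else Z.abs (acoef x a)) * acc)%Z) 1%Z l.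
Lemma Lfold_pos x l : (0 < Lfold x l)%Z.
Proof.
  induction l; simpl. lia.
  destruct (Z.abs (acoef x a) =? 0) eqn:E. lia. apply Z.eqb_neq in E. nia.
Qed.
Lemma Lfold_dvd x l a : In a l -> acoef x a <> 0%Z -> (Z.abs (acoef x a) | Lfold x l)%Z.
Proof.
  induction l as [|b l IH]; simpl; intros H Hc. destruct H.
  destruct H as [->|H].
  - destruct (Z.abs (acoef x a) =? 0) eqn:E. apply Z.eqb_eq in E; lia.
    apply Z.divide_mul_l, Z.divide_refl.
  - apply Z.divide_mul_r; auto.
Qed.
Definition Lprod x q := Lfold x (atoms q).

Definition nlin x L c (t : lin) : lin :=
  ladd (lscale (L / Z.abs c) (fst t, lrem x (snd t))) (0%Z, [(x, Z.sgn c)]).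
Lemma nlin_coef x L c t : lcoef x (snd (nlin x L c t)) = Z.sgn c.
Proof.
  unfold nlin, ladd, lscale; simpl. rewrite lcoef_app, lcoef_scale, lcoef_rem; simpl.
  rewrite Nat.eqb_refl. ring.
Qed.
Lemma sgn_abs_mul c : (Z.sgn c * Z.abs c = c)%Z.
Proof. destruct c; simpl; lia. Qed.
Lemma nlin_eval e x L c t v : c = lcoef x (snd t) -> c <> 0%Z -> (Z.abs c | L)%Z ->
  leval (upd e x (L * v)) (nlin x L c t) = (L / Z.abs c * leval (upd e x v) t)%Z.
Proof.
  intros Hc Hc0 [z Hz]. subst L.
  rewrite Z.div_mul by lia.
  unfold nlin. rewrite leval_add, leval_scale, !leval_upd. simpl. rewrite lcoef_rem.
  unfold leval; simpl. rewrite <- Hc, lrem_lrem, Nat.eqb_refl. simpl.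
  rewrite Z.div_mul by lia.
  rewrite <- (sgn_abs_mul c) at 3. ring.
Qed.

Definition natom x L (a : qf) : qf :=
  match a with
  | QLt t => if lcoef x (snd t) =? 0 then a else QLt (nlin x L (lcoef x (snd t)) t)
  | QDv k t => if lcoef x (snd t) =? 0 then a
      else QDv (k * Z.to_pos (L / Z.abs (lcoef x (snd t))))%positive (nlin x L (lcoef x (snd t)) t)
  | QNDv k t => if lcoef x (snd t) =? 0 then a
      else QNDv (k * Z.to_pos (L / Z.abs (lcoef x (snd t))))%positive (nlin x L (lcoef x (snd t)) t)
  | _ => a end.

Lemma leval_upd0 e x v w t : lcoef x (snd t) = 0%Z -> leval (upd e x v) t = leval (upd e x w) t.
Proof. intro H; rewrite !leval_upd, H. ring. Qed.

Lemma dvd_scale k m X : (0 < m)%Z ->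
  ((Z.pos (k * Z.to_pos m) | m * X)%Z <-> (Z.pos k | X)%Z).
Proof.
  intro Hm. rewrite Pos2Z.inj_mul, Z2Pos.id by lia.
  rewrite (Z.mul_comm m X). apply Z.mul_divide_cancel_r. lia.
Qed.

Lemma natom_sem e x L a v : (0 < L)%Z -> isatom a ->
  (acoef x a <> 0%Z -> (Z.abs (acoef x a) | L)%Z) ->
  (qsem (upd e x (L * v)) (natom x L a) <-> qsem (upd e x v) a).
Proof.
  intros HL Ha Hd.
  destruct a; simpl in *; try tauto;
  (destruct (lcoef x (snd t) =? 0) eqn:E;
   [apply Z.eqb_eq in E; simpl; rewrite (leval_upd0 _ _ _ v _ E); tauto|]);
  apply Z.eqb_neq in E; specialize (Hd E);
  assert (Hm : (0 < L / Z.abs (lcoef x (snd t)))%Z) by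
    (destruct Hd as [z Hz]; rewrite Hz, Z.div_mul by lia; nia);
  simpl; rewrite nlin_eval by auto.
  - split; intro; nia.
  - apply dvd_scale; auto.
  - rewrite dvd_scale; tauto.
Qed.

Lemma norm_sem e x q v :
  qsem (upd e x (Lprod x q * v)) (qmap (natom x (Lprod x q)) q) <-> qsem (upd e x v) q.
Proof.
  apply qmap_sem. intros a Ha. apply natom_sem.
  - apply Lfold_pos.
  - eapply atoms_isatom; eauto.
  - intro. apply Lfold_dvd; auto.
Qed.

Definition unitq x q := forall a, In a (atoms q) -> (-1 <= acoef x a <= 1)%Z.

Lemma natom_unit x L a : isatom a -> (-1 <= acoef x (natom x L a) <= 1)%Z.
Proof.
  intro Ha; destruct a; cbn [natom acoef] in *; try lia;
  destruct (lcoef x (snd t) =? 0) eqn:E; cbn [acoef]; try (apply Z.eqb_eq in E; lia);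
  rewrite nlin_coef; destruct (lcoef x (snd t)); simpl; lia.
Qed.

Lemma natom_isatom x L a : isatom a -> atoms (natom x L a) = [natom x L a].
Proof.
  intro Ha; destruct a; simpl in *; try tauto; try reflexivity;
  destruct (lcoef x (snd t) =? 0); reflexivity.
Qed.

Definition dfold (l : list qf) : positive :=
  fold_right (fun a acc => match a with QDv k _ | QNDv k _ => (k * acc)%positive | _ => acc end) 1%positive l.
Lemma dfold_dvd l k t : In (QDv k t) l \/ In (QNDv k t) l -> (Z.pos k | Z.pos (dfold l))%Z.
Proof.
  induction l as [|b l IH]; simpl; intros H. tauto.
  destruct H as [[->|H]|[->|H]]; try (rewrite Pos2Z.inj_mul; apply Z.divide_mul_l, Z.divide_refl);
  destruct b; try (apply IH; tauto); rewrite Pos2Z.inj_mul; apply Z.divide_mul_r; apply IH; tauto.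
Qed.
Definition divs q := dfold (atoms q).

Definition minf_atom x (a : qf) : qf :=
  match a with
  | QLt t => if Z.ltb 0 (lcoef x (snd t)) then QF
             else if Z.ltb (lcoef x (snd t)) 0 then QT else a
  | _ => a end.
Definition minf x q := qmap (minf_atom x) q.

Lemma dvd_shift k D X Y : (k | D)%Z -> ((k | X)%Z <-> (k | X + Y * D)%Z).
Proof.
  intro H; split; intro H1.
  - apply Z.divide_add_r; auto. apply Z.divide_mul_r; auto.
  - replace X with (X + Y * D - Y * D)%Z by ring. apply Z.divide_sub_r; auto.
    apply Z.divide_mul_r; auto.
Qed.

Lemma minf_periodic e x q v m :
  qsem (upd e x v) (minf x q) <-> qsem (upd e x (v + m * Z.pos (divs q))%Z) (minf x q).
Proof.
  apply qmap_congr. intros a Ha.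
  assert (Hat := atoms_isatom _ _ Ha).
  destruct a; simpl in *; try tauto.
  - destruct (Z.ltb 0 (lcoef x (snd t))) eqn:E1; simpl; try tauto.
    destruct (Z.ltb (lcoef x (snd t)) 0) eqn:E2; simpl; try tauto.
    apply Z.ltb_ge in E1; apply Z.ltb_ge in E2.
    rewrite (leval_upd0 _ _ v (v + m * Z.pos (divs q))%Z) by lia. tauto.
  - assert (Hk : (Z.pos k | Z.pos (divs q))%Z) by (apply (dfold_dvd _ _ t); auto).
    rewrite !leval_upd.
    replace (fst t + lcoef x (snd t) * (v + m * Z.pos (divs q)) + lsum e (lrem x (snd t)))%Z
      with (fst t + lcoef x (snd t) * v + lsum e (lrem x (snd t)) + (lcoef x (snd t) * m) * Z.pos (divs q))%Z by ring.
    apply dvd_shift; auto.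
  - assert (Hk : (Z.pos k | Z.pos (divs q))%Z) by (apply (dfold_dvd _ _ t); auto).
    rewrite !leval_upd.
    replace (fst t + lcoef x (snd t) * (v + m * Z.pos (divs q)) + lsum e (lrem x (snd t)))%Z
      with (fst t + lcoef x (snd t) * v + lsum e (lrem x (snd t)) + (lcoef x (snd t) * m) * Z.pos (divs q))%Z by ring.
    rewrite <- dvd_shift; tauto.
Qed.

Definition arest e x (a : qf) : Z :=
  match a with QLt t => (fst t + lsum e (lrem x (snd t)))%Z | _ => 0%Z end.
Definition zfold e x (l : list qf) : Z :=
  fold_right (fun a acc => Z.min acc (- Z.abs (arest e x a))) 0%Z l.
Lemma zfold_le e x l a : In a l -> (zfold e x l <= - Z.abs (arest e x a))%Z.
Proof.
  induction l as [|b l IH]; simpl; intro H. destruct H.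
  destruct H as [<-|H]. lia. specialize (IH H). lia.
Qed.

Lemma minf_small e x q v : (v < zfold e x (atoms q))%Z ->
  (qsem (upd e x v) q <-> qsem (upd e x v) (minf x q)).
Proof.
  intro Hv. symmetry. apply qmap_sem. intros a Ha.
  assert (Hat := atoms_isatom _ _ Ha).
  assert (Hz := zfold_le e x _ _ Ha).
  destruct a; simpl in *; try tauto.
  rewrite leval_upd.
  destruct (Z.ltb 0 (lcoef x (snd t))) eqn:E1; simpl.
  - apply Z.ltb_lt in E1. split; [tauto|]. intro. nia.
  - destruct (Z.ltb (lcoef x (snd t)) 0) eqn:E2; simpl.
    + apply Z.ltb_lt in E2. split; [|tauto]. intro. nia.
    + apply Z.ltb_ge in E1; apply Z.ltb_ge in E2. rewrite leval_upd.
      replace (lcoef x (snd t)) with 0%Z by lia. tauto.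
Qed.

Definition lbs x q : list lin :=
  flat_map (fun a => match a with
    | QLt t => if lcoef x (snd t) =? 1 then [lneg (fst t, lrem x (snd t))] else []
    | _ => [] end) (atoms q).

Lemma descent e x q v : unitq x q ->
  (forall b j, In b (lbs x q) -> (1 <= j <= Z.pos (divs q))%Z -> v <> (leval e b + j)%Z) ->
  qsem (upd e x v) q -> qsem (upd e x (v - Z.pos (divs q))%Z) q.
Proof.
  intros Hu Hb. apply qsem_mono. intros a Ha.
  assert (Hat := atoms_isatom _ _ Ha). specialize (Hu a Ha).
  destruct a; simpl in *; try tauto; rewrite !leval_upd.
  - destruct (Z.eq_dec (lcoef x (snd t)) 1) as [E|E].
    + intro H. destruct (Z_lt_le_dec 0 (fst t + lcoef x (snd t) * (v - Z.pos (divs q)) + lsum e (lrem x (snd t)))%Z) as [|Hle]; auto.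
      exfalso. apply (Hb (lneg (fst t, lrem x (snd t))) (v + fst t + lsum e (lrem x (snd t)))%Z).
      * unfold lbs. apply in_flat_map. exists (QLt t). split; auto. simpl. rewrite E. simpl. auto.
      * lia.
      * rewrite leval_neg. unfold leval; simpl. ring.
    + intro. nia.
  - assert (Hk : (Z.pos k | Z.pos (divs q))%Z) by (apply (dfold_dvd _ _ t); auto).
    replace (fst t + lcoef x (snd t) * (v - Z.pos (divs q)) + lsum e (lrem x (snd t)))%Z
      with (fst t + lcoef x (snd t) * v + lsum e (lrem x (snd t)) + (- lcoef x (snd t)) * Z.pos (divs q))%Z by ring.
    rewrite <- dvd_shift; tauto.
  - assert (Hk : (Z.pos k | Z.pos (divs q))%Z) by (apply (dfold_dvd _ _ t); auto).
    replace (fst t + lcoef x (snd t) * (v - Z.pos (divs q)) + lsum e (lrem x (snd t)))%Z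
      with (fst t + lcoef x (snd t) * v + lsum e (lrem x (snd t)) + (- lcoef x (snd t)) * Z.pos (divs q))%Z by ring.
    rewrite <- dvd_shift; tauto.
Qed.

Close Scope Z_scope.

Open Scope Z_scope.

Definition jlist (D : positive) : list Z := map (fun n => Z.of_nat n + 1) (seq 0 (Pos.to_nat D)).
Lemma in_jlist j D : In j (jlist D) <-> 1 <= j <= Z.pos D.
Proof.
  unfold jlist. rewrite in_map_iff. split.
  - intros [n [<- Hn]]. apply in_seq in Hn. lia.
  - intro H. exists (Z.to_nat (j - 1)). split. lia. apply in_seq. lia.
Qed.
Fixpoint bigor (l : list qf) : qf := match l with [] => QF | a :: l' => QOr a (bigor l') end.
Lemma bigor_sem e l : qsem e (bigor l) <-> exists a, In a l /\ qsem e a.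
Proof.
  induction l; simpl. firstorder.
  rewrite IHl. split.
  - intros [H|[b [? ?]]]; eauto.
  - intros [b [[<-|H] H2]]; eauto.
Qed.

Definition cooper x q : qf :=
  QOr (bigor (map (fun j => qsubst x (lconst j) (minf x q)) (jlist (divs q))))
      (bigor (flat_map (fun b => map (fun j => qsubst x (ladd b (lconst j)) q) (jlist (divs q))) (lbs x q))).

Lemma cooper_ok e x q : unitq x q -> ((exists v, qsem (upd e x v) q) <-> qsem e (cooper x q)).
Proof.
  intro Hu. set (D := Z.pos (divs q)).
  assert (HD : 1 <= D) by (unfold D; lia).
  set (Z0 := zfold e x (atoms q)).
  unfold cooper; simpl. rewrite !bigor_sem. split.
  - intros [v Hv].
    destruct (classic (exists b j, In b (lbs x q) /\ 1 <= j <= D /\ qsem (upd e x (leval e b + j)) q))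
      as [[b [j [Hb [Hj Hq]]]]|Hno].
    + right. exists (qsubst x (ladd b (lconst j)) q). split.
      * apply in_flat_map. exists b. split; auto. apply in_map_iff. exists j. split; auto.
        apply in_jlist. exact Hj.
      * apply qsubst_sem. rewrite leval_add, leval_const. exact Hq.
    + left.
      assert (Hall : forall n : nat, qsem (upd e x (v - Z.of_nat n * D)) q).
      { induction n.
        - replace (v - Z.of_nat 0 * D) with v by lia. exact Hv.
        - replace (v - Z.of_nat (S n) * D) with (v - Z.of_nat n * D - D) by lia.
          apply descent; auto.
          intros b j Hb Hj Heq. apply Hno. exists b, j. rewrite <- Heq. auto. }
      set (n := Z.to_nat (Z.abs v + Z.abs Z0 + 1)).
      set (w := v - Z.of_nat n * D).
      assert (Hw : w < Z0) by (unfold w, n; nia).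
      assert (Hm : qsem (upd e x w) (minf x q)) by (apply (proj1 (minf_small e x q w Hw)); apply Hall).
      set (j := (w - 1) mod D + 1).
      assert (Hj : 1 <= j <= D) by (unfold j; pose proof (Z.mod_pos_bound (w - 1) D); lia).
      exists (qsubst x (lconst j) (minf x q)). split.
      * apply in_map_iff. exists j. split; auto. apply in_jlist. exact Hj.
      * apply qsubst_sem. rewrite leval_const.
        apply (minf_periodic _ _ _ _ ((w - 1) / D)).
        replace (j + (w - 1) / D * Z.pos (divs q)) with w. exact Hm.
        unfold j. fold D. pose proof (Z.div_mod (w - 1) D). lia.
  - intros [[a [Ha Hs]]|[a [Ha Hs]]].
    + apply in_map_iff in Ha. destruct Ha as [j [<- Hj]].
      apply qsubst_sem in Hs. rewrite leval_const in Hs.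
      set (n := Z.abs j + Z.abs Z0 + 1).
      assert (Hlt : j + (- n) * D < Z0) by (unfold n; clear -HD; nia).
      exists (j + (- n) * D). apply (proj2 (minf_small e x q _ Hlt)).
      apply minf_periodic. exact Hs.
    + apply in_flat_map in Ha. destruct Ha as [b [Hb Ha]].
      apply in_map_iff in Ha. destruct Ha as [j [<- Hj]].
      apply qsubst_sem in Hs. eauto.
Qed.

Definition qelim x q : qf :=
  cooper x (QAnd (QDv (Z.to_pos (Lprod x q)) (lvar x)) (qmap (natom x (Lprod x q)) q)).

Lemma qelim_ok e x q : (exists v, qsem (upd e x v) q) <-> qsem e (qelim x q).
Proof.
  unfold qelim. rewrite <- cooper_ok.
  - assert (HL : 0 < Lprod x q) by apply Lfold_pos.
    simpl. rewrite Z2Pos.id by exact HL. split.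
    + intros [v Hv]. exists (Lprod x q * v). rewrite leval_var, upd_same.
      split. apply Z.divide_factor_l. apply norm_sem. exact Hv.
    + intros [w [[z Hz] Hw]]. rewrite leval_var, upd_same in Hz. subst w.
      exists z. apply norm_sem. rewrite Z.mul_comm. exact Hw.
  - intros a Ha. simpl in Ha. destruct Ha as [<-|Ha].
    + simpl. rewrite Nat.eqb_refl. lia.
    + apply atoms_qmap in Ha.
      * destruct Ha as [a0 [Ha0 ->]]. apply natom_unit. eapply atoms_isatom; eauto.
      * apply natom_isatom.
Qed.

Close Scope Z_scope.

Fixpoint tlin (t : term) : lin :=
  match t with
  | TVar i => lvar i | TZero => lconst 0 | TOne => lconst 1
  | TAdd a b => ladd (tlin a) (tlin b) | TOpp a => lneg (tlin a) end.
Lemma tlin_ok (e : nat -> Z) t : eval Zstruct e t = leval e (tlin t).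
Proof.
  induction t; simpl.
  - now rewrite leval_var. - now rewrite leval_const. - now rewrite leval_const.
  - rewrite leval_add. congruence. - rewrite leval_neg. congruence.
Qed.

Fixpoint qe (phi : form) : qf :=
  match phi with
  | FEq a b => let d := ladd (tlin a) (lneg (tlin b)) in
      QAnd (QLt (ladd (lconst 1) d)) (QLt (ladd (lconst 1) (lneg d)))
  | FLt a b => QLt (ladd (tlin b) (lneg (tlin a)))
  | FBot => QF
  | FNot p => qneg (qe p)
  | FAnd p q => QAnd (qe p) (qe q)
  | FOr p q => QOr (qe p) (qe q)
  | FImp p q => QOr (qneg (qe p)) (qe q)
  | FAll i p => qneg (qelim i (qneg (qe p)))
  | FEx i p => qelim i (qe p)
  end.

Lemma qe_ok phi : forall (e : nat -> Z), sat Zstruct e phi <-> qsem e (qe phi).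
Proof.
  induction phi; intro e; cbn [sat qe qsem].
  - repeat rewrite ?leval_add, ?leval_neg, ?leval_const. rewrite <- !tlin_ok. change (car Zstruct) with Z. lia.
  - rewrite leval_add, leval_neg, <- !tlin_ok. change (s_lt Zstruct) with Z.lt. lia.
  - tauto.
  - rewrite qneg_sem, IHphi. tauto.
  - rewrite IHphi1, IHphi2. tauto.
  - rewrite IHphi1, IHphi2. tauto.
  - rewrite qneg_sem, IHphi1, IHphi2. split; [|tauto]. intro H. destruct (classic (qsem e (qe phi1))); tauto.
  - rewrite qneg_sem, <- qelim_ok. split.
    + intros H [v Hv]. rewrite qneg_sem, <- IHphi in Hv. auto.
    + intros H x. apply NNPP. intro Hx. apply H. exists x. rewrite qneg_sem, <- IHphi. exact Hx.
  - rewrite <- qelim_ok. split; intros [v Hv]; exists v; apply IHphi; exact Hv.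
Qed.

Fixpoint ntm (n : nat) (t : term) : term :=
  match n with O => TZero | S n => TAdd t (ntm n t) end.
Definition zterm (z : Z) (t : term) : term :=
  match z with Z0 => TZero | Zpos p => ntm (Pos.to_nat p) t | Zneg p => TOpp (ntm (Pos.to_nat p) t) end.
Lemma ntm_Z (e : nat -> Z) n t : eval Zstruct e (ntm n t) = (Z.of_nat n * eval Zstruct e t)%Z.
Proof.
  induction n; cbn [ntm eval].
  - change (s_zero Zstruct) with 0%Z. lia.
  - rewrite IHn. change (s_add Zstruct) with Z.add. lia.
Qed.
Lemma zterm_Z (e : nat -> Z) z t : eval Zstruct e (zterm z t) = (z * eval Zstruct e t)%Z.
Proof.
  destruct z; unfold zterm.
  - cbn [eval]. change (s_zero Zstruct) with 0%Z. lia.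
  - rewrite ntm_Z. now rewrite positive_nat_Z.
  - cbn [eval]. rewrite ntm_Z, positive_nat_Z. change (s_opp Zstruct) with Z.opp. lia.
Qed.
Definition smul (S : Lstruct) (z : Z) (y : S) : S := eval S (fun _ => y) (zterm z (TVar 0)).
Lemma ntm_S (S : Lstruct) e n t : eval S e (ntm n t) = eval S (fun _ => eval S e t) (ntm n (TVar 0)).
Proof. induction n; simpl; congruence. Qed.
Lemma zterm_S (S : Lstruct) e z t : eval S e (zterm z t) = smul S z (eval S e t).
Proof.
  unfold smul. destruct z; simpl zterm; try reflexivity.
  - apply ntm_S.
  - simpl. f_equal. apply ntm_S.
Qed.
Lemma smul_Z z (y : Zstruct) : smul Zstruct z y = (z * y)%Z.
Proof. unfold smul. rewrite zterm_Z. reflexivity. Qed.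

Definition tr_lin (t : lin) : term :=
  fold_right (fun p acc => TAdd (zterm (snd p) (TVar (fst p))) acc) (zterm (fst t) TOne) (snd t).
Lemma tr_lin_Z (e : nat -> Z) t : eval Zstruct e (tr_lin t) = leval e t.
Proof.
  destruct t as [c l]. unfold tr_lin, leval; simpl.
  induction l as [|p l IH]; simpl.
  - rewrite zterm_Z. simpl. lia.
  - simpl in IH. rewrite IH, zterm_Z. simpl. lia.
Qed.
Lemma tr_lin_ext (S : Lstruct) e e' t :
  (forall p, In p (snd t) -> e (fst p) = e' (fst p)) -> eval S e (tr_lin t) = eval S e' (tr_lin t).
Proof.
  destruct t as [c l]. unfold tr_lin; simpl. induction l as [|p l IH]; simpl; intro H.
  - rewrite !zterm_S. reflexivity.
  - rewrite !zterm_S. simpl. rewrite H by auto. f_equal. apply IH. auto.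
Qed.

Fixpoint maxvt (t : term) : nat :=
  match t with
  | TVar i => S i | TZero | TOne => 0
  | TAdd a b => Nat.max (maxvt a) (maxvt b) | TOpp a => maxvt a end.
Lemma eval_ext (S : Lstruct) e e' t :
  (forall i, (i < maxvt t)%nat -> e i = e' i) -> eval S e t = eval S e' t.
Proof.
  induction t; cbn [eval maxvt]; intro H; try reflexivity.
  - apply H. lia.
  - rewrite IHt1, IHt2; auto; intros; apply H; lia.
  - rewrite IHt; auto.
Qed.
Fixpoint maxvf (p : form) : nat :=
  match p with
  | FEq a b | FLt a b => Nat.max (maxvt a) (maxvt b)
  | FBot => 0
  | FNot p => maxvf p
  | FAnd p q | FOr p q | FImp p q => Nat.max (maxvf p) (maxvf q)
  | FAll i p | FEx i p => Nat.max (S i) (maxvf p) end.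
Lemma sat_ext (S : Lstruct) p : forall e e',
  (forall i, (i < maxvf p)%nat -> e i = e' i) -> (sat S e p <-> sat S e' p).
Proof.
  induction p; cbn [sat maxvf]; intros e e' H.
  - rewrite (eval_ext S e e' t), (eval_ext S e e' t0); [tauto| |]; intros; apply H; lia.
  - rewrite (eval_ext S e e' t), (eval_ext S e e' t0); [tauto| |]; intros; apply H; lia.
  - tauto.
  - rewrite (IHp e e'); auto; tauto.
  - rewrite (IHp1 e e'), (IHp2 e e'); try tauto; intros; apply H; lia.
  - rewrite (IHp1 e e'), (IHp2 e e'); try tauto; intros; apply H; lia.
  - rewrite (IHp1 e e'), (IHp2 e e'); try tauto; intros; apply H; lia.
  - assert (Hx : forall x, sat S (upd e n x) p <-> sat S (upd e' n x) p).
    { intro x. apply IHp. intros i Hi. unfold upd. destruct (Nat.eqb i n); auto. apply H; lia. }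
    split; intros H1 x; apply Hx; auto.
  - assert (Hx : forall x, sat S (upd e n x) p <-> sat S (upd e' n x) p).
    { intro x. apply IHp. intros i Hi. unfold upd. destruct (Nat.eqb i n); auto. apply H; lia. }
    split; intros [x H1]; exists x; apply Hx; auto.
Qed.

Definition dvdF (k : Z) (t : term) : form :=
  FEx (maxvt t) (FEq (zterm k (TVar (maxvt t))) t).
Lemma dvdF_sem (S : Lstruct) e k t : sat S e (dvdF k t) <-> exists y, smul S k y = eval S e t.
Proof.
  unfold dvdF; cbn [sat]. setoid_rewrite zterm_S. cbn [eval]. setoid_rewrite upd_same.
  split; intros [y Hy]; exists y; rewrite Hy; apply eval_ext; intros i Hi; rewrite upd_other; auto; lia.
Qed.

Fixpoint tr_q (q : qf) : form :=
  match q with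
  | QT => FNot FBot | QF => FBot
  | QLt t => FLt TZero (tr_lin t)
  | QDv k t => dvdF (Z.pos k) (tr_lin t)
  | QNDv k t => FNot (dvdF (Z.pos k) (tr_lin t))
  | QAnd a b => FAnd (tr_q a) (tr_q b)
  | QOr a b => FOr (tr_q a) (tr_q b) end.

Lemma tr_q_Z (e : nat -> Z) q : sat Zstruct e (tr_q q) <-> qsem e q.
Proof.
  induction q; simpl tr_q; simpl qsem; try (simpl; tauto).
  - simpl. rewrite tr_lin_Z. reflexivity.
  - rewrite dvdF_sem, tr_lin_Z. split.
    + intros [y Hy]. rewrite smul_Z in Hy. exists y. rewrite <- Hy. apply Z.mul_comm.
    + intros [z Hz]. exists z. rewrite smul_Z, Hz. apply Z.mul_comm.
  - cbn [sat]. rewrite dvdF_sem, tr_lin_Z. split.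
    + intros H [z Hz]. apply H. exists z. rewrite smul_Z, Hz. apply Z.mul_comm.
    + intros H [y Hy]. apply H. rewrite smul_Z in Hy. exists y. rewrite <- Hy. apply Z.mul_comm.
Qed.

Lemma pres_qe (S : Lstruct) : Presburger_model S ->
  forall e phi, sat S e phi <-> sat S e (tr_q (qe phi)).
Proof.
  intros HS e phi.
  assert (H := HS (FAnd (FImp phi (tr_q (qe phi))) (FImp (tr_q (qe phi)) phi))).
  simpl in H. apply H. intro e'. rewrite tr_q_Z, <- qe_ok. tauto.
Qed.

Ltac zs := cbn [sat eval s_lt s_add s_opp s_zero s_one Zstruct car upd] in *.

Lemma f_eval (M N : Lstruct) (f : M -> N) : elementary_map M N f ->
  forall e t, eval N (fun i => f (e i)) t = f (eval M e t).
Proof.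
  intros H e t. set (j := maxvt t). set (e' := upd e j (eval M e t)).
  assert (H0 : sat M e' (FEq t (TVar j))).
  { simpl. unfold e'. rewrite upd_same. apply eval_ext; intros; apply upd_other; unfold j; lia. }
  apply H in H0. simpl in H0.
  rewrite (eval_ext N _ (fun i => f (e i))) in H0.
  - rewrite H0. unfold e'. now rewrite upd_same.
  - intros i Hi. unfold e'. rewrite upd_other; auto. unfold j; lia.
Qed.

Lemma sat_pw (S : Lstruct) e e' p : (forall i, e i = e' i) -> (sat S e p <-> sat S e' p).
Proof. intro H. apply sat_ext. auto. Qed.

Definition env2 {T : Type} (x y : T) : nat -> T := fun i => match i with 0 => x | _ => y end.

Fixpoint rent (r : nat -> nat) (t : term) : term :=
  match t with
  | TVar i => TVar (r i) | TZero => TZero | TOne => TOne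
  | TAdd a b => TAdd (rent r a) (rent r b) | TOpp a => TOpp (rent r a) end.
Fixpoint renf (r : nat -> nat) (p : form) : form :=
  match p with
  | FEq a b => FEq (rent r a) (rent r b) | FLt a b => FLt (rent r a) (rent r b)
  | FBot => FBot | FNot p => FNot (renf r p)
  | FAnd p q => FAnd (renf r p) (renf r q) | FOr p q => FOr (renf r p) (renf r q)
  | FImp p q => FImp (renf r p) (renf r q)
  | FAll i p => FAll (r i) (renf r p) | FEx i p => FEx (r i) (renf r p) end.
Lemma eval_ren (S : Lstruct) r e t : eval S e (rent r t) = eval S (fun i => e (r i)) t.
Proof. induction t; simpl; congruence. Qed.
Lemma sat_ren (S : Lstruct) r p : (forall i j, r i = r j -> i = j) ->
  forall e, sat S e (renf r p) <-> sat S (fun i => e (r i)) p.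
Proof.
  intro Hr. induction p; intro e; simpl; rewrite ?eval_ren; try tauto.
  - rewrite IHp. tauto.
  - rewrite IHp1, IHp2. tauto.
  - rewrite IHp1, IHp2. tauto.
  - rewrite IHp1, IHp2. tauto.
  - assert (Hx : forall x, sat S (upd e (r n) x) (renf r p) <-> sat S (upd (fun i => e (r i)) n x) p).
    { intro x. rewrite IHp. apply sat_pw. intro i. unfold upd.
      destruct (Nat.eqb i n) eqn:E1; destruct (Nat.eqb (r i) (r n)) eqn:E2; auto.
      - apply Nat.eqb_eq in E1. subst. rewrite Nat.eqb_refl in E2. discriminate.
      - apply Nat.eqb_eq in E2. apply Hr in E2. subst. rewrite Nat.eqb_refl in E1. discriminate. }
    split; intros H x; apply Hx; auto.
  - assert (Hx : forall x, sat S (upd e (r n) x) (renf r p) <-> sat S (upd (fun i => e (r i)) n x) p).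
    { intro x. rewrite IHp. apply sat_pw. intro i. unfold upd.
      destruct (Nat.eqb i n) eqn:E1; destruct (Nat.eqb (r i) (r n)) eqn:E2; auto.
      - apply Nat.eqb_eq in E1. subst. rewrite Nat.eqb_refl in E2. discriminate.
      - apply Nat.eqb_eq in E2. apply Hr in E2. subst. rewrite Nat.eqb_refl in E1. discriminate. }
    split; intros [x H]; exists x; apply Hx; auto.
Qed.


Lemma lsum_filter e (p : nat * Z -> bool) l :
  lsum e l = (lsum e (filter p l) + lsum e (filter (fun x => negb (p x)) l))%Z.
Proof. induction l; simpl. lia. destruct (p a); simpl; rewrite IHl; ring. Qed.

Lemma sat_bigF (S : Lstruct) e (G : nat -> form) l :
  sat S e (fold_right (fun r acc => FOr (G r) acc) FBot l) <-> exists r, In r l /\ sat S e (G r).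
Proof.
  induction l; simpl. firstorder. rewrite IHl. split.
  - intros [H|[r [? ?]]]; eauto.
  - intros [r [[<-|H] H2]]; eauto.
Qed.

Section PresFacts.
Variables (S : Lstruct) (PS : Presburger_model S).

Lemma NA : forall x y : S, s_lt S (s_opp S x) y -> s_lt S (s_zero S) (s_add S x y).
Proof.
  intros x y. apply (PS (FImp (FLt (TOpp (TVar 0)) (TVar 1)) (FLt TZero (TAdd (TVar 0) (TVar 1))))
    ltac:(intro e; zs; lia) (env2 x y)).
Qed.
Lemma NB : forall x y : S, s_lt S y (s_opp S x) -> ~ s_lt S (s_zero S) (s_add S x y).
Proof.
  intros x y. apply (PS (FImp (FLt (TVar 1) (TOpp (TVar 0))) (FNot (FLt TZero (TAdd (TVar 0) (TVar 1)))))
    ltac:(intro e; zs; lia) (env2 x y)).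
Qed.

Lemma rem_S (k : positive) (x : S) : exists w r, (r < Pos.to_nat k)%nat /\
  x = s_add S (smul S (Z.pos k) w) (smul S (Z.of_nat r) (s_one S)).
Proof.
  set (G := fun r : nat => FEq (TVar 0) (TAdd (zterm (Z.pos k) (TVar 1)) (zterm (Z.of_nat r) TOne))).
  assert (H := PS (FEx 1 (fold_right (fun r acc => FOr (G r) acc) FBot (seq 0 (Pos.to_nat k))))).
  simpl in H. setoid_rewrite sat_bigF in H.
  assert (Hv : forall e : nat -> Zstruct, exists x0 : Zstruct,
      exists r, In r (seq 0 (Pos.to_nat k)) /\ sat Zstruct (upd e 1%nat x0) (G r)).
  { intro e. exists (e 0%nat / Z.pos k)%Z. exists (Z.to_nat (e 0%nat mod Z.pos k)).
    pose proof (Z.mod_pos_bound (e 0%nat) (Z.pos k)).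
    split; [apply in_seq; lia|].
    unfold G; cbn [sat eval]; rewrite !zterm_Z. zs. rewrite Z2Nat.id by lia.
    rewrite upd_same, upd_other by lia.
    pose proof (Z.div_mod (e 0%nat) (Z.pos k)). lia. }
  destruct (H Hv (fun _ => x)) as [w [r [Hr Hg]]].
  exists w, r. split. apply in_seq in Hr; lia.
  unfold G in Hg. cbn [sat eval] in Hg. rewrite !zterm_S in Hg. simpl in Hg. exact Hg.
Qed.

Lemma dvd_shift_S (k : positive) (r : Z) (U w : S) :
  (exists y, smul S (Z.pos k) y = s_add S U (s_add S (smul S (Z.pos k) w) (smul S r (s_one S)))) <->
  (exists y, smul S (Z.pos k) y = s_add S U (smul S r (s_one S))).
Proof.
  set (D1 := dvdF (Z.pos k) (TAdd (TVar 0) (TAdd (zterm (Z.pos k) (TVar 1)) (zterm r TOne)))).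
  set (D2 := dvdF (Z.pos k) (TAdd (TVar 0) (zterm r TOne))).
  assert (H := PS (FAnd (FImp D1 D2) (FImp D2 D1))).
  assert (Hv : forall e : nat -> Zstruct, sat Zstruct e (FAnd (FImp D1 D2) (FImp D2 D1))).
  { intro e. cbn [sat]. unfold D1, D2. rewrite !dvdF_sem. cbn [eval]. rewrite !zterm_Z. zs.
    split; intros [y Hy]; rewrite smul_Z in Hy.
    - exists (y - e 1%nat)%Z. rewrite smul_Z. lia.
    - exists (y + e 1%nat)%Z. rewrite smul_Z. lia. }
  specialize (H Hv (env2 U w)). cbn [sat] in H. unfold D1, D2 in H. rewrite !dvdF_sem in H.
  cbn [eval] in H. rewrite !zterm_S in H. simpl in H. exact H.
Qed.
End PresFacts.

Section Stable.
Variables (M N : Lstruct) (f : M -> N).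
Hypotheses (PM : Presburger_model M) (PN : Presburger_model N) (Hel : elementary_map M N f).
Hypothesis (Hend : end_extension M N f).
Variables (n : nat) (b : nat -> N).

Definition Def (q : qf) : Prop := exists (psi : form) (c : nat -> M),
  forall a : nat -> M, sat N (merge n (fun i => f (a i)) b) (tr_q q) <-> sat M (merge n a c) psi.

Lemma Def_common q1 q2 : Def q1 -> Def q2 ->
  exists psi1 psi2 c, forall a,
    (sat N (merge n (fun i => f (a i)) b) (tr_q q1) <-> sat M (merge n a c) psi1) /\
    (sat N (merge n (fun i => f (a i)) b) (tr_q q2) <-> sat M (merge n a c) psi2).
Proof.
  intros [psi1 [c1 H1]] [psi2 [c2 H2]].
  set (K := maxvf psi1).
  set (r := fun i => if Nat.ltb i n then i else (i + K)%nat).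
  set (c := fun i => if Nat.ltb i K then c1 i else c2 (i - K)%nat).
  exists psi1, (renf r psi2), c. intro a. split.
  - rewrite H1. apply sat_ext. intros i Hi. unfold merge, c.
    destruct (Nat.ltb i n); auto. replace (Nat.ltb i K) with true; auto. symmetry; apply Nat.ltb_lt; exact Hi.
  - rewrite H2. rewrite sat_ren.
    + apply sat_pw. intro i. unfold merge, r, c.
      destruct (Nat.ltb i n) eqn:E.
      * rewrite E. reflexivity.
      * apply Nat.ltb_ge in E.
        replace (Nat.ltb (i + K) n) with false by (symmetry; apply Nat.ltb_ge; lia).
        replace (Nat.ltb (i + K) K) with false by (symmetry; apply Nat.ltb_ge; lia).
        f_equal. lia.
    + intros i j. unfold r. destruct (Nat.ltb i n) eqn:E1; destruct (Nat.ltb j n) eqn:E2;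
      rewrite ?Nat.ltb_lt, ?Nat.ltb_ge in *; lia.
Qed.

Lemma Def_and q1 q2 : Def q1 -> Def q2 -> Def (QAnd q1 q2).
Proof.
  intros H1 H2. destruct (Def_common _ _ H1 H2) as [p1 [p2 [c H]]].
  exists (FAnd p1 p2), c. intro a. simpl. destruct (H a) as [A B]. rewrite A, B. tauto.
Qed.
Lemma Def_or q1 q2 : Def q1 -> Def q2 -> Def (QOr q1 q2).
Proof.
  intros H1 H2. destruct (Def_common _ _ H1 H2) as [p1 [p2 [c H]]].
  exists (FOr p1 p2), c. intro a. simpl. destruct (H a) as [A B]. rewrite A, B. tauto.
Qed.

Definition lta (t : lin) : lin := (0%Z, filter (fun p => Nat.ltb (fst p) n) (snd t)).
Definition ltb' (t : lin) : lin := (fst t, filter (fun p => negb (Nat.ltb (fst p) n)) (snd t)).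

Lemma split_S (S : Lstruct) (PS : Presburger_model S) t (e : nat -> S) :
  eval S e (tr_lin t) = s_add S (eval S e (tr_lin (lta t))) (eval S e (tr_lin (ltb' t))).
Proof.
  apply (PS (FEq (tr_lin t) (TAdd (tr_lin (lta t)) (tr_lin (ltb' t))))).
  intro e'. cbn [sat eval]. rewrite !tr_lin_Z. unfold leval, lta, ltb'; simpl.
  rewrite (lsum_filter e' (fun p => Nat.ltb (fst p) n) (snd t)). change (s_add Zstruct) with Z.add. lia.
Qed.

Lemma F1 t (a c : nat -> M) :
  eval N (merge n (fun i => f (a i)) b) (tr_lin t) =
  s_add N (f (eval M (merge n a c) (tr_lin (lta t)))) (eval N b (tr_lin (ltb' t))).
Proof.
  rewrite split_S by exact PN. f_equal.
  - rewrite <- f_eval by exact Hel. apply tr_lin_ext. intros p Hp.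
    unfold lta in Hp; simpl in Hp. apply filter_In in Hp. destruct Hp as [_ Hp].
    unfold merge. rewrite Hp. reflexivity.
  - apply tr_lin_ext. intros p Hp.
    unfold ltb' in Hp; simpl in Hp. apply filter_In in Hp. destruct Hp as [_ Hp].
    unfold merge. destruct (Nat.ltb (fst p) n); simpl in Hp; congruence.
Qed.

Lemma f_opp u : f (s_opp M u) = s_opp N (f u).
Proof.
  assert (H := f_eval M N f Hel (fun _ => u) (TOpp (TVar 0))). simpl in H. congruence.
Qed.

Lemma Def_lt t : Def (QLt t).
Proof.
  set (s := eval N b (tr_lin (ltb' t))).
  destruct (Hend s) as [[m Hm]|[Hab|Hbe]].
  - exists (FLt TZero (TAdd (tr_lin (lta t)) (TVar n))), (fun _ => m). intro a.
    rewrite (Hel _ (merge n a (fun _ => m))). cbn [tr_q sat eval].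
    rewrite (F1 t a (fun _ => m)), f_eval by exact Hel. fold s. rewrite <- Hm.
    replace (merge n a (fun _ : nat => m) n) with m; [reflexivity|]. unfold merge. now rewrite Nat.ltb_irrefl.
  - exists (FNot FBot), (fun _ => s_zero M). intro a. cbn [tr_q sat eval].
    rewrite (F1 t a (fun _ => s_zero M)). fold s. split; [tauto|]. intros _.
    apply NA; auto. rewrite <- f_opp. apply Hab.
  - exists FBot, (fun _ => s_zero M). intro a. cbn [tr_q sat eval].
    rewrite (F1 t a (fun _ => s_zero M)). fold s. split; [|tauto]. intro H.
    eapply NB; eauto. rewrite <- f_opp. apply Hbe.
Qed.

Lemma Dv_core (k : positive) t : exists psi, forall a c,
  (exists y, smul N (Z.pos k) y = eval N (merge n (fun i => f (a i)) b) (tr_lin t)) <->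
  sat M (merge n a c) psi.
Proof.
  set (s := eval N b (tr_lin (ltb' t))).
  destruct (rem_S N PN k s) as [w [r [Hr Hs]]].
  exists (dvdF (Z.pos k) (TAdd (tr_lin (lta t)) (zterm (Z.of_nat r) TOne))). intros a c.
  rewrite (Hel _ (merge n a c)), dvdF_sem. cbn [eval]. rewrite zterm_S, f_eval by exact Hel.
  rewrite (F1 t a c). fold s. rewrite Hs. cbn [eval]. apply dvd_shift_S. exact PN.
Qed.

Lemma Def_dv k t : Def (QDv k t).
Proof.
  destruct (Dv_core k t) as [psi H]. exists psi, (fun _ => s_zero M). intro a.
  cbn [tr_q]. rewrite dvdF_sem. apply H.
Qed.
Lemma Def_ndv k t : Def (QNDv k t).
Proof.
  destruct (Dv_core k t) as [psi H]. exists (FNot psi), (fun _ => s_zero M). intro a.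
  cbn [tr_q sat]. rewrite dvdF_sem, (H a (fun _ => s_zero M)). tauto.
Qed.

Lemma Def_all q : Def q.
Proof.
  induction q.
  - exists (FNot FBot), (fun _ => s_zero M). intro. simpl. tauto.
  - exists FBot, (fun _ => s_zero M). intro. simpl. tauto.
  - apply Def_lt.
  - apply Def_dv.
  - apply Def_ndv.
  - apply Def_and; auto.
  - apply Def_or; auto.
Qed.

End Stable.

Theorem end_to_stable (M N : Lstruct) (f : M -> N) :
  Presburger_model M -> Presburger_model N -> elementary_map M N f ->
  end_extension M N f -> stably_embedded M N f.
Proof.
  intros PM PN Hel Hend n phi b.
  destruct (Def_all M N f PN Hel Hend n b (qe phi)) as [psi [c H]].
  exists psi, c. intro a. rewrite pres_qe by exact PN. apply H.
Qed.



Section PF2.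
Variables (S : Lstruct) (PS : Presburger_model S).
Lemma S_trich (x y : S) : s_lt S x y \/ x = y \/ s_lt S y x.
Proof.
  apply (PS (FOr (FLt (TVar 0) (TVar 1)) (FOr (FEq (TVar 0) (TVar 1)) (FLt (TVar 1) (TVar 0)))))
    with (e := env2 x y). intro e. zs. lia.
Qed.
Lemma S_trans (x y z : S) : s_lt S x y -> s_lt S y z -> s_lt S x z.
Proof.
  apply (PS (FImp (FLt (TVar 0) (TVar 1)) (FImp (FLt (TVar 1) (TVar 2)) (FLt (TVar 0) (TVar 2)))))
    with (e := fun i => match i with 0 => x | 1 => y | _ => z end). intro e. zs. lia.
Qed.
Lemma S_discr (x y : S) : s_lt S x y -> s_add S x (s_one S) = y \/ s_lt S (s_add S x (s_one S)) y.
Proof.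
  apply (PS (FImp (FLt (TVar 0) (TVar 1)) (FOr (FEq (TAdd (TVar 0) TOne) (TVar 1)) (FLt (TAdd (TVar 0) TOne) (TVar 1)))))
    with (e := env2 x y). intro e. zs. lia.
Qed.
Lemma S_irrefl (x : S) : ~ s_lt S x x.
Proof.
  apply (PS (FNot (FLt (TVar 0) (TVar 0)))) with (e := fun _ => x). intro e. zs. lia.
Qed.
End PF2.

Lemma zivt (R : Z -> Prop) : forall (d : nat) a b, Z.of_nat d = (b - a)%Z -> (a < b)%Z -> R a -> ~ R b ->
  exists m, R m /\ ~ R (m + 1)%Z.
Proof.
  induction d; intros a b Hd Hab Ha Hb. lia.
  destruct (classic (R (a + 1)%Z)) as [H|H]; [|eauto].
  destruct (Z.eq_dec (a + 1) b) as [E|E]. subst. contradiction.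
  apply (IHd (a + 1)%Z b); auto; lia.
Qed.

Definition PP (psi : form) (j : nat) := FEx 0 (FAnd (FEq (TVar 0) (TVar j)) psi).
Definition PP' (psi : form) (j : nat) := FEx 0 (FAnd (FEq (TVar 0) (TAdd (TVar j) TOne)) psi).
Lemma PP_sem (S : Lstruct) e psi j : j <> 0%nat -> (sat S e (PP psi j) <-> sat S (upd e 0 (e j)) psi).
Proof.
  intro Hj. unfold PP; cbn [sat eval]. split.
  - intros [x [Hx H]]. rewrite upd_same, upd_other in Hx by auto. subst. exact H.
  - intro H. exists (e j). rewrite upd_same, upd_other by auto. auto.
Qed.
Lemma PP'_sem (S : Lstruct) e psi j : j <> 0%nat ->
  (sat S e (PP' psi j) <-> sat S (upd e 0 (s_add S (e j) (s_one S))) psi).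
Proof.
  intro Hj. unfold PP'; cbn [sat eval]. split.
  - intros [x [Hx H]]. rewrite upd_same, upd_other in Hx by auto. subst. exact H.
  - intro H. exists (s_add S (e j) (s_one S)). rewrite upd_same, upd_other by auto. auto.
Qed.

Lemma merge1_ext (S : Lstruct) psi (E c : nat -> S) z :
  (forall i, (1 <= i < maxvf psi)%nat -> E i = c i) ->
  (sat S (upd E 0 z) psi <-> sat S (merge 1 (fun _ => z) c) psi).
Proof.
  intro H. apply sat_ext. intros i Hi. unfold upd, merge.
  destruct i; simpl. reflexivity. apply H. lia.
Qed.

Lemma ivt_S (S : Lstruct) (PS : Presburger_model S) psi (c : nat -> S) (x1 x2 : S) :
  s_lt S x1 x2 -> sat S (merge 1 (fun _ => x1) c) psi -> ~ sat S (merge 1 (fun _ => x2) c) psi ->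
  exists m, sat S (merge 1 (fun _ => m) c) psi /\
            ~ sat S (merge 1 (fun _ => s_add S m (s_one S)) c) psi.
Proof.
  intros H12 H1 H2.
  set (B := Datatypes.S (maxvf psi)).
  set (Phi := FImp (FAnd (PP psi B) (FAnd (FNot (PP psi (B + 1))) (FLt (TVar B) (TVar (B + 1)))))
                   (FEx (B + 2) (FAnd (PP psi (B + 2)) (FNot (PP' psi (B + 2)))))).
  assert (Hv : forall e : nat -> Zstruct, sat Zstruct e Phi).
  { intro e. unfold Phi. cbn [sat]. rewrite !PP_sem by (unfold B; lia).
    intros [Ha [Hb Hlt]].
    set (R := fun z : Z => sat Zstruct (upd e 0 z) psi).
    cbn [eval s_lt Zstruct] in Hlt.
    assert (Hz := zivt R (Z.to_nat (e (B + 1)%nat - e B)) (e B) (e (B + 1)%nat)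
       ltac:(lia) Hlt Ha Hb).
    destruct Hz as [m [Hm1 Hm2]].
    exists m. rewrite PP_sem, PP'_sem by lia. rewrite upd_same.
    assert (Hx : forall z, sat Zstruct (upd (upd e (B + 2)%nat m) 0 z) psi <-> R z).
    { intro z. apply sat_ext. intros i Hi. unfold upd.
      destruct (Nat.eqb i 0); auto. replace (Nat.eqb i (B + 2)) with false; auto.
      symmetry. apply Nat.eqb_neq. unfold B in *. lia. }
    rewrite !Hx. split; auto. }
  assert (HE := PS Phi Hv (fun i => if Nat.eqb i B then x1 else if Nat.eqb i (B + 1) then x2 else c i)).
  unfold Phi in HE. cbn [sat] in HE. rewrite !PP_sem in HE by (unfold B; lia).
  rewrite Nat.eqb_refl in HE.
  replace (Nat.eqb (B + 1) B) with false in HE by (symmetry; apply Nat.eqb_neq; lia).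
  rewrite Nat.eqb_refl in HE.
  assert (Hc : forall i, (1 <= i < maxvf psi)%nat ->
     (if Nat.eqb i B then x1 else if Nat.eqb i (B + 1) then x2 else c i) = c i).
  { intros i Hi. replace (Nat.eqb i B) with false by (symmetry; apply Nat.eqb_neq; unfold B; lia).
    replace (Nat.eqb i (B + 1)) with false by (symmetry; apply Nat.eqb_neq; unfold B; lia). reflexivity. }
  rewrite !(merge1_ext S psi _ c) in HE by exact Hc.
  destruct HE as [m [Hm1 Hm2]]. split; auto. split; auto. cbn [eval]. rewrite Nat.eqb_refl.
  replace (Nat.eqb (B + 1) B) with false by (symmetry; apply Nat.eqb_neq; lia).
  rewrite Nat.eqb_refl. exact H12.
  exists m. rewrite PP_sem, PP'_sem in * by lia. rewrite upd_same in *.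
  assert (Hc2 : forall i, (1 <= i < maxvf psi)%nat ->
     upd (fun i => if Nat.eqb i B then x1 else if Nat.eqb i (B + 1) then x2 else c i) (B + 2) m i = c i).
  { intros i Hi. rewrite upd_other by (unfold B; lia). apply Hc; auto. }
  rewrite !(merge1_ext S psi _ c) in Hm1, Hm2 by exact Hc2. auto.
Qed.

Theorem stable_to_end (M N : Lstruct) (f : M -> N) :
  Presburger_model M -> Presburger_model N -> elementary_map M N f ->
  stably_embedded M N f -> end_extension M N f.
Proof.
  intros PM PN Hel Hst y.
  destruct (classic (exists x, f x = y)) as [|Hno]; [left; auto|right].
  destruct (classic (forall x, s_lt N (f x) y)) as [|H1]; [left; auto|right].
  intro xh. apply NNPP. intro H2.
  apply not_all_ex_not in H1. destruct H1 as [xl Hxl].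
  assert (Hl : s_lt N y (f xl)).
  { destruct (S_trich N PN (f xl) y) as [?|[?|?]]; [contradiction| |auto]. exfalso; apply Hno; eauto. }
  assert (Hh : s_lt N (f xh) y).
  { destruct (S_trich N PN (f xh) y) as [?|[?|?]]; [auto| |contradiction]. exfalso; apply Hno; eauto. }
  destruct (Hst 1%nat (FLt (TVar 0) (TVar 1)) (fun _ => y)) as [psi [c Hpc]].
  assert (HQ : forall z, s_lt N (f z) y <-> sat M (merge 1 (fun _ => z) c) psi).
  { intro z. rewrite <- (Hpc (fun _ => z)). cbn [sat eval]. unfold merge. simpl. tauto. }
  assert (Hlt : s_lt M xh xl).
  { apply (Hel (FLt (TVar 0) (TVar 1)) (env2 xh xl)). cbn [sat eval]. simpl.
    eapply S_trans; eauto. }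
  destruct (ivt_S M PM psi c xh xl Hlt) as [m [Hm1 Hm2]].
  - apply HQ. auto.
  - rewrite <- HQ. intro. apply (S_irrefl N PN y). eapply S_trans; eauto.
  - rewrite <- HQ in Hm1, Hm2.
    assert (Hf1 : f (s_add M m (s_one M)) = s_add N (f m) (s_one N)).
    { assert (H := f_eval M N f Hel (fun _ => m) (TAdd (TVar 0) TOne)). simpl in H. congruence. }
    rewrite Hf1 in Hm2.
    destruct (S_discr N PN _ _ Hm1) as [E|E].
    + apply Hno. exists (s_add M m (s_one M)). congruence.
    + contradiction.
Qed.

Fixpoint emb (phi : form) : formP :=
  match phi with
  | FEq a b => PEq a b | FLt a b => PLt a b | FBot => PBot | FNot p => PNot (emb p)
  | FAnd p q => PAnd (emb p) (emb q) | FOr p q => POr (emb p) (emb q)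
  | FImp p q => PImp (emb p) (emb q) | FAll i p => PAll i (emb p) | FEx i p => PEx i (emb p) end.
Lemma emb_sem (N : Lstruct) P phi : forall e, satP N P e (emb phi) <-> sat N e phi.
Proof.
  induction phi; intro e; simpl; try tauto.
  - rewrite IHphi; tauto.
  - rewrite IHphi1, IHphi2; tauto.
  - rewrite IHphi1, IHphi2; tauto.
  - rewrite IHphi1, IHphi2; tauto.
  - split; intros H x; apply IHphi; auto.
  - split; intros [x H]; exists x; apply IHphi; auto.
Qed.

Definition allP (B i : nat) : formP :=
  fold_right (fun j acc => if Nat.eqb j i then acc else PAnd (PMem (TVar j)) acc) (PNot PBot) (seq 0 B).
Lemma allP_sem (N : Lstruct) P e B i :
  satP N P e (allP B i) <-> (forall j, (j < B)%nat -> j <> i -> P (e j)).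
Proof.
  unfold allP. assert (G : forall s, satP N P e (fold_right (fun j acc => if Nat.eqb j i then acc else PAnd (PMem (TVar j)) acc) (PNot PBot) s)
     <-> (forall j, In j s -> j <> i -> P (e j))).
  { induction s as [|a s IH]; simpl. split; [tauto|]. intros _ H; exact H.
    destruct (Nat.eqb a i) eqn:E.
    - apply Nat.eqb_eq in E. subst. rewrite IH. split.
      + intros H j [<-|Hj] Hne; [congruence|]. auto.
      + intros H j Hj Hne. auto.
    - apply Nat.eqb_neq in E. simpl. rewrite IH. split.
      + intros [H1 H2] j [<-|Hj] Hne; auto.
      + intros H. split; auto. }
  rewrite G. split; intros H j Hj Hne; apply H; auto; apply in_seq in Hj || apply in_seq; lia.
Qed.

Definition TV (i : nat) (p : form) : formP :=
  PImp (allP (maxvf p) i) (PImp (PEx i (emb p)) (PEx i (PAnd (PMem (TVar i)) (emb p)))).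
Lemma TV_sem (N : Lstruct) P e i p : satP N P e (TV i p) <->
  ((forall j, (j < maxvf p)%nat -> j <> i -> P (e j)) ->
   (exists x, sat N (upd e i x) p) -> exists x, P x /\ sat N (upd e i x) p).
Proof.
  unfold TV. cbn [satP eval]. rewrite allP_sem. setoid_rewrite emb_sem.
  setoid_rewrite upd_same. tauto.
Qed.

Definition EE : formP :=
  PAll 0 (POr (PMem (TVar 0)) (POr (PAll 1 (PImp (PMem (TVar 1)) (PLt (TVar 1) (TVar 0))))
                                  (PAll 1 (PImp (PMem (TVar 1)) (PLt (TVar 0) (TVar 1)))))).
Lemma EE_sem (N : Lstruct) P e : satP N P e EE <->
  (forall y, P y \/ (forall z, P z -> s_lt N z y) \/ (forall z, P z -> s_lt N y z)).
Proof.
  unfold EE. cbn [satP eval]. unfold upd. simpl. tauto.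
Qed.

Definition Tax (phiP : formP) : Prop :=
  (exists phi, (forall e : nat -> Zstruct, sat Zstruct e phi) /\ phiP = emb phi) \/
  (exists i p, phiP = TV i p) \/ phiP = EE.

Section Sub.
Variables (N : Lstruct) (P : N -> Prop).
Hypothesis HT : forall phi, Tax phi -> forall e, satP N P e phi.

Lemma HTV i p e : (forall j, (j < maxvf p)%nat -> j <> i -> P (e j)) ->
   (exists x, sat N (upd e i x) p) -> exists x, P x /\ sat N (upd e i x) p.
Proof. apply TV_sem. apply HT. right; left. eauto. Qed.

Lemma P0 : P (s_zero N).
Proof.
  destruct (HTV 0 (FEq (TVar 0) TZero) (fun _ => s_zero N)) as [x [Hx1 Hx2]].
  - intros j Hj Hne. simpl in Hj. lia.
  - exists (s_zero N). simpl. apply upd_same.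
  - simpl in Hx2. rewrite upd_same in Hx2. congruence.
Qed.
Lemma P1 : P (s_one N).
Proof.
  destruct (HTV 0 (FEq (TVar 0) TOne) (fun _ => s_zero N)) as [x [Hx1 Hx2]].
  - intros j Hj Hne. simpl in Hj. lia.
  - exists (s_one N). simpl. apply upd_same.
  - simpl in Hx2. rewrite upd_same in Hx2. congruence.
Qed.
Lemma Padd x y : P x -> P y -> P (s_add N x y).
Proof.
  intros Hx Hy.
  destruct (HTV 0 (FEq (TVar 0) (TAdd (TVar 1) (TVar 2))) (fun i => match i with 1 => x | _ => y end))
    as [z [Hz1 Hz2]].
  - intros j Hj Hne. simpl in Hj. destruct j as [|[|[|]]]; auto; lia.
  - exists (s_add N x y). simpl. rewrite upd_same, !upd_other by lia. reflexivity.
  - simpl in Hz2. rewrite upd_same, !upd_other in Hz2 by lia. congruence.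
Qed.
Lemma Popp x : P x -> P (s_opp N x).
Proof.
  intros Hx.
  destruct (HTV 0 (FEq (TVar 0) (TOpp (TVar 1))) (fun _ => x)) as [z [Hz1 Hz2]].
  - intros j Hj Hne. auto.
  - exists (s_opp N x). simpl. rewrite upd_same, !upd_other by lia. reflexivity.
  - simpl in Hz2. rewrite upd_same, !upd_other in Hz2 by lia. congruence.
Qed.

Definition subM : Lstruct :=
  {| car := {y : N | P y};
     s_zero := exist _ (s_zero N) P0;
     s_one := exist _ (s_one N) P1;
     s_add := fun x y => exist _ (s_add N (proj1_sig x) (proj1_sig y)) (Padd _ _ (proj2_sig x) (proj2_sig y));
     s_opp := fun x => exist _ (s_opp N (proj1_sig x)) (Popp _ (proj2_sig x));
     s_lt := fun x y => s_lt N (proj1_sig x) (proj1_sig y) |}.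
Definition subf : subM -> N := fun x => proj1_sig x.

Lemma sub_eval e t : eval N (fun i => subf (e i)) t = subf (eval subM e t).
Proof. induction t; simpl; try reflexivity; rewrite ?IHt1, ?IHt2, ?IHt; reflexivity. Qed.

Lemma sub_upd (e : nat -> subM) i x : forall j, subf (upd e i x j) = upd (fun k => subf (e k)) i (subf x) j.
Proof. intro j. unfold upd. destruct (Nat.eqb j i); reflexivity. Qed.

Lemma sub_elem : elementary_map subM N subf.
Proof.
  intro phi. induction phi; intro e; cbn [sat]; rewrite ?sub_eval; try tauto.
  - split; [congruence|]. unfold subf. destruct (eval subM e t), (eval subM e t0). simpl.
    intro; subst. f_equal. apply proof_irrelevance.
  - rewrite IHphi. tauto.
  - rewrite IHphi1, IHphi2. tauto.
  - rewrite IHphi1, IHphi2. tauto.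
  - rewrite IHphi1, IHphi2. tauto.
  - split.
    + intros H y. apply NNPP. intro Hy.
      destruct (HTV n (FNot phi) (fun k => subf (e k))) as [z [Hz1 Hz2]].
      * intros j _ _. exact (proj2_sig (e j)).
      * exists y. exact Hy.
      * apply Hz2. specialize (H (exist _ z Hz1)). rewrite IHphi in H.
        rewrite (sat_pw _ _ _ _ (sub_upd e n _)) in H. exact H.
    + intros H x. rewrite IHphi, (sat_pw _ _ _ _ (sub_upd e n _)). apply H.
  - split.
    + intros [x Hx]. exists (subf x). rewrite IHphi, (sat_pw _ _ _ _ (sub_upd e n _)) in Hx. exact Hx.
    + intro H. destruct (HTV n phi (fun k => subf (e k))) as [z [Hz1 Hz2]].
      * intros j _ _. exact (proj2_sig (e j)).
      * exact H.
      * exists (exist _ z Hz1). rewrite IHphi, (sat_pw _ _ _ _ (sub_upd e n _)). exact Hz2.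
Qed.
End Sub.

Theorem part2 : exists T : formP -> Prop,
      forall (N : Lstruct) (P : N -> Prop),
        (forall phi : formP, T phi -> forall e : nat -> N, satP N P e phi)
        <->
        (Presburger_model N /\
         exists (M : Lstruct) (f : M -> N),
           Presburger_model M /\ elementary_map M N f /\
           (forall y : N, P y <-> exists x : M, f x = y) /\
           stably_embedded M N f).
Proof.
  exists Tax. intros N P. split.
  - intro HT.
    assert (PN : Presburger_model N).
    { intros phi Hphi e. apply (emb_sem N P). apply HT. left. eauto. }
    split; auto.
    exists (subM N P HT), (subf N P HT).
    assert (Hel := sub_elem N P HT).
    assert (PM : Presburger_model (subM N P HT)).
    { intros phi Hphi e. apply Hel. apply PN. exact Hphi. }
    split; auto. split; auto. split.
    + intro y. split.
      * intro Hy. exists (exist _ y Hy). reflexivity.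
      * intros [x <-]. exact (proj2_sig x).
    + apply end_to_stable; auto.
      assert (HE := proj1 (EE_sem N P (fun _ => s_zero N)) (HT EE ltac:(right; right; reflexivity) _)).
      intro y. destruct (HE y) as [H|[H|H]].
      * left. exists (exist _ y H). reflexivity.
      * right; left. intro x. apply H. exact (proj2_sig x).
      * right; right. intro x. apply H. exact (proj2_sig x).
  - intros [PN [M [f [PM [Hel [HP Hst]]]]]].
    assert (Hend := stable_to_end M N f PM PN Hel Hst).
    intros phi [[psi [Hv ->]]|[[i [p ->]]| ->]] e.
    + apply emb_sem. apply PN. exact Hv.
    + apply TV_sem. intros Hall [x Hx].
      assert (Hch : forall j, exists x0 : M, (j < maxvf p)%nat -> j <> i -> f x0 = e j).
      { intro j. destruct (classic ((j < maxvf p)%nat /\ j <> i)) as [[H1 H2]|H].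
        - destruct (proj1 (HP (e j)) (Hall j H1 H2)) as [x0 Hx0]. exists x0. auto.
        - exists (s_zero M). intros H1 H2. tauto. }
      set (e' := fun j => proj1_sig (constructive_indefinite_description _ (Hch j))).
      assert (He' : forall j, (j < maxvf p)%nat -> j <> i -> f (e' j) = e j).
      { intros j H1 H2. unfold e'. destruct (constructive_indefinite_description _ (Hch j)). simpl. auto. }
      assert (Hswap : forall y, sat N (upd e i y) p <-> sat N (upd (fun j => f (e' j)) i y) p).
      { intro y. apply sat_ext. intros j Hj. unfold upd. destruct (Nat.eqb j i) eqn:E; auto.
        apply Nat.eqb_neq in E. symmetry. apply He'; auto. }
      assert (HM : sat M e' (FEx i p)).
      { apply Hel. exists x. apply Hswap. exact Hx. }
      destruct HM as [x' Hx'].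
      exists (f x'). split.
      * apply HP. eauto.
      * apply Hswap. apply Hel in Hx'. revert Hx'. apply sat_pw. intro j. unfold upd.
        destruct (Nat.eqb j i); reflexivity.
    + apply EE_sem. intro y. destruct (Hend y) as [[x Hx]|[H|H]].
      * left. apply HP. eauto.
      * right; left. intros z Hz. apply HP in Hz. destruct Hz as [x <-]. auto.
      * right; right. intros z Hz. apply HP in Hz. destruct Hz as [x <-]. auto.
Qed.

Theorem corollary5p7 :
  (forall (M N : Lstruct) (f : M -> N),
      Presburger_model M -> Presburger_model N -> elementary_map M N f ->
      (stably_embedded M N f <-> end_extension M N f))
  /\
  (exists T : formP -> Prop,
      forall (N : Lstruct) (P : N -> Prop),
        (forall phi : formP, T phi -> forall e : nat -> N, satP N P e phi)
        <->
        (Presburger_model N /\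
         exists (M : Lstruct) (f : M -> N),
           Presburger_model M /\ elementary_map M N f /\
           (forall y : N, P y <-> exists x : M, f x = y) /\
           stably_embedded M N f)).
Proof.
  split.
  - intros M N f PM PN Hel. split.
    + apply stable_to_end; auto.
    + apply end_to_stable; auto.
  - exact part2.
Qed.
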